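(* Let $G=(L\cup R,E)$ be a bipartite graph in which every node of $L$ has degree 2, and let $d_{c,\max}$ be the maximum degree of nodes in $R$. Let $k\ge 2$ be an integer and let $\mathcal{S}\subset L$ be such that the induced subgraph $G(\mathcal{S})$ is a tree whose longest path has length $2k-2$. Then \[|\mathcal{S}|\le \sum_{i=0}^{k-2}(d_{c,\max}-1)^{\lfloor (i+1)/2\rfloor}.\]
   Context: For $\mathcal{S}\subset L$, $\Gamma(\mathcal{S})$ is the set of neighbors of $\mathcal{S}$ in $R$, and the induced subgraph $G(\mathcal{S})$ has node set $\mathcal{S}\cup\Gamma(\mathcal{S})$ and all edges of $G$ between $\mathcal{S}$ and $\Gamma(\mathcal{S})$. The length of a path is its number of edges. *)

(* Defs.v *)
From mathcomp Require Import all_boot.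
Set Implicit Arguments. Unset Strict Implicit. Unset Printing Implicit Defensive.

(* Bipartite graph G = (L ∪ R, E) given by adj : L -> R -> bool
   (adj l r <=> {l,r} ∈ E). Vertices of G are L + R. *)
Section Bip.
Variables (L R : finType) (adj : L -> R -> bool).

Definition degL (l : L) : nat := #|[set r | adj l r]|.
Definition degR (r : R) : nat := #|[set l | adj l r]|.

Definition dcmax : nat := \max_(r : R) degR r.

Definition nbhd (S : {set L}) : {set R} := [set r | [exists l in S, adj l r]].

Definition indV (S : {set L}) : {set L + R} :=
  [set u | match u with inl l => l \in S | inr r => r \in nbhd S end].

Definition indE (S : {set L}) : rel (L + R) := fun u v =>
  match u, v with
  | inl l, inr r => (l \in S) && adj l r
  | inr r, inl l => (l \in S) && adj l r
  | _, _ => false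
  end.

(* a (simple) path of G(S): distinct vertices x :: p, consecutive ones adjacent;
   its length (number of edges) is size p *)
Definition is_path (S : {set L}) (x : L + R) (p : seq (L + R)) : bool :=
  path (indE S) x p && uniq (x :: p).

Definition connectedG (S : {set L}) : Prop :=
  forall u v, u \in indV S -> v \in indV S -> connect (indE S) u v.

Definition acyclicG (S : {set L}) : Prop :=
  forall x p, is_path S x p -> 2 <= size p -> ~~ indE S (last x p) x.

Definition is_tree (S : {set L}) : Prop :=
  indV S != set0 /\ connectedG S /\ acyclicG S.

Definition longest_path_len (S : {set L}) (n : nat) : Prop :=
  (exists x p, is_path S x p /\ size p = n) /\
  (forall x p, is_path S x p -> size p <= n).

End Bip.

(* Main.v *)
Require Import Defs.
From mathcomp Require Import all_boot zify.
Set Implicit Arguments. Unset Strict Implicit. Unset Printing Implicit Defensive.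
Lemma card_bigcup_le (I T : finType) (P : pred I) (F : I -> {set T}) :
  #|\bigcup_(i | P i) F i| <= \sum_(i | P i) #|F i|.
Proof.
elim/big_rec2: _ => [|i m A _ h]; first by rewrite cards0.
by rewrite cardsU (leq_trans (leq_subr _ _)) // leq_add2l.
Qed.

Section GenS.
Variable T : finType.
Variable e : rel T.
Hypothesis esym : forall a b, e a b = e b a.

Lemma walk_rev a s : path e a s ->
  [/\ path e (last a s) (rev (belast a s)),
      last (last a s) (rev (belast a s)) = a & size (rev (belast a s)) = size s].
Proof.
move=> h; split.
- by rewrite rev_path (@eq_path _ _ e) // => x y; rewrite esym.
- by case: s {h} => [|b s] //=; rewrite rev_cons last_rcons.
- by rewrite size_rev size_belast.
Qed.

Lemma walk_take x0 p i j : path e x0 p -> i <= j -> j <= size p ->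
  exists t, [/\ path e (last x0 (take i p)) t,
    last (last x0 (take i p)) t = last x0 (take j p) & size t = j - i].
Proof.
move=> hp hij hj; exists (take (j - i) (drop i p)); split.
- apply: take_path; move: hp; rewrite -{1}(cat_take_drop i p) cat_path.
  by case/andP.
- by rewrite -last_cat -takeD subnKC.
- rewrite size_takel // size_drop; lia.
Qed.

Lemma first_hit (A : pred T) v w : path e v w -> uniq (v :: w) -> A (last v w) ->
  exists q, [/\ path e v q, uniq (v :: q), A (last v q), {subset q <= w} &
     forall z, z \in v :: q -> A z -> z = last v q].
Proof.
elim: w v => [|b w IH] v /=.
  move=> _ _ Av; exists [::]; split => //= z; by rewrite inE => /eqP ->.
case/andP=> evb hp /andP [vn hu] hl.
case Av: (A v).
  exists [::]; split => //= z; by rewrite inE => /eqP ->.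
have [q [h1 h2 h3 h4 h5]] := IH b hp hu hl.
exists (b :: q); split => //=.
- by rewrite evb.
- apply/andP; split => //; apply: contra vn; rewrite !inE => /orP [->//|/h4 ->].
  by rewrite orbT.
- by move=> z; rewrite !inE => /orP [/eqP ->|/h4 ->] //; rewrite ?inE ?eqxx ?orbT.
- move=> z; rewrite inE => /orP [/eqP -> |]; first by rewrite Av.
  exact: h5.
Qed.

End GenS.
Section Ball.
Variables (L R : finType) (adj : L -> R -> bool) (S : {set L}).
Local Notation T := (L + R)%type.
Local Notation e := (indE adj S).

Lemma esymE : forall a b : T, e a b = e b a.
Proof. by case=> a; case. Qed.

Definition isL (v : T) : bool := if v is inl _ then true else false.

Lemma e_flip (a b : T) : e a b -> isL b = ~~ isL a.
Proof. by case: a; case: b. Qed.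

Lemma path_parity (a : T) s : path e a s -> isL (last a s) = isL a (+) odd (size s).
Proof.
elim: s a => [|b s IH] a /=; first by rewrite addbF.
by case/andP => h /IH ->; rewrite (e_flip h) addNb addbN.
Qed.

Lemma e_indV (a b : T) : e a b -> a \in indV adj S.
Proof.
case: a => [l|r]; case: b => [l'|r'] //= /andP [h1 h2]; rewrite inE //.
by rewrite inE; apply/existsP; exists l'; rewrite h1.
Qed.

Variable c : T.

Fixpoint ball n : {set T} :=
  if n is m.+1 then ball m :|: [set w | [exists u in ball m, e u w]] else [set c].

Definition lay n : {set T} := if n is m.+1 then ball m.+1 :\: ball m else ball 0.
Definition nb (u : T) : {set T} := [set w | e u w].

Lemma ball_mono m n : m <= n -> ball m \subset ball n.
Proof.
elim: n => [|n IH]; first by rewrite leqn0 => /eqP ->.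
rewrite leq_eqVlt => /orP [/eqP->//|/IH h].
apply: subset_trans h _; exact: subsetUl.
Qed.

Lemma walk_ball a s n : path e a s -> a \in ball n -> last a s \in ball (n + size s).
Proof.
elim: s a n => [|b s IH] a n /=; first by rewrite addn0.
case/andP=> hab hp ha; rewrite addnS -addSn; apply: IH hp _.
rewrite /= inE; apply/orP; right; rewrite inE; apply/existsP; exists a.
by rewrite ha hab.
Qed.

Lemma lay_sub n : lay n.+1 \subset \bigcup_(u in lay n) (nb u :\: ball n).
Proof.
apply/subsetP => w; rewrite /lay inE => /andP [wn].
rewrite /= inE (negbTE wn) /= inE => /existsP [u /andP [hu huw]].
apply/bigcupP; exists u; last by rewrite inE wn inE.
case: n wn hu => [|m] wn hu //=.
rewrite inE hu andbT; apply: contra wn => hm.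
rewrite /= inE; apply/orP; right; rewrite inE; apply/existsP; exists u.
by rewrite hm huw.
Qed.

Lemma lay_parent n u : 0 < n -> u \in lay n -> exists2 z, z \in ball n & e u z.
Proof.
case: n => [|m] // _; rewrite /lay inE => /andP [um].
rewrite /= inE (negbTE um) /= inE => /existsP [z /andP [hz hzu]].
exists z; first by rewrite inE hz.
by rewrite esymE.
Qed.

Lemma lay_card n : #|lay n.+1| <= \sum_(u in lay n) (#|nb u| - (0 < n)).
Proof.
apply: (leq_trans (subset_leq_card (lay_sub n))).
apply: (leq_trans (card_bigcup_le _ _)).
apply: leq_sum => u hu.
case: (posnP n) => [->|hn]; first by rewrite subn0; apply: subset_leq_card; exact: subsetDl.
have [z hz huz] := lay_parent hn hu.
have h1 : nb u :\: ball n \subset nb u :\ z.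
  apply/subsetP => w; rewrite !inE => /andP [wn ->]; rewrite andbT.
  by apply: contra wn => /eqP ->.
apply: (leq_trans (subset_leq_card h1)).
have := cardsD1 z (nb u); rewrite inE huz /= => ->; lia.
Qed.

Lemma lay_side n u : u \in lay n -> isL u = isL c (+) odd n.
Proof.
elim: n u => [|n IH] u.
  by rewrite /= inE => /eqP ->; rewrite addbF.
move/(subsetP (lay_sub n)) => /bigcupP [z hz]; rewrite !inE => /andP [_ hzu].
by rewrite (e_flip hzu) (IH z hz) /= addbN.
Qed.

Definition Lset : {set T} := [set u | isL u].

Lemma sL_step n : #|ball n.+1 :&: Lset| <= #|ball n :&: Lset| + #|lay n.+1 :&: Lset|.
Proof.
have h : ball n.+1 :&: Lset \subset (ball n :&: Lset) :|: (lay n.+1 :&: Lset).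
  apply/subsetP => w; rewrite !inE => /andP [hw ->]; rewrite !andbT.
  by case: (w \in ball n) hw => //= ->.
apply: (leq_trans (subset_leq_card h)).
by rewrite cardsU leq_subr.
Qed.

Lemma layL0 n : ~~ (isL c (+) odd n) -> #|lay n :&: Lset| = 0.
Proof.
move=> h; apply/eqP; rewrite cards_eq0; apply/eqP/setP => u.
rewrite !inE; apply/negbTE; apply/negP => /andP [hu hL].
by move: h; rewrite -(lay_side hu) hL.
Qed.

Lemma layL_le n : #|lay n :&: Lset| <= #|lay n|.
Proof. exact/subset_leq_card/subsetIl. Qed.

Hypothesis hdeg : forall l : L, degL adj l = 2.

Lemma nb_deg u : #|nb u| <= (if isL u then 2 else dcmax adj).
Proof.
case: u => [l|r] /=.
  rewrite -(hdeg l) /degL -(card_imset _ (@inr_inj L R)).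
  apply: subset_leq_card; apply/subsetP => w; rewrite inE.
  case: w => [l'|r'] //= /andP [_ h]; apply/imsetP; exists r' => //; by rewrite inE.
apply: (@leq_trans (degR adj r)); last exact: (leq_bigmax (F := degR adj)).
rewrite /degR -(card_imset _ (@inl_inj L R)).
apply: subset_leq_card; apply/subsetP => w; rewrite inE.
case: w => [l'|r'] //= /andP [_ h]; apply/imsetP; exists l' => //; by rewrite inE.
Qed.

Lemma lay_rec n : #|lay n.+1| <= #|lay n| * ((if isL c (+) odd n then 2 else dcmax adj) - (0 < n)).
Proof.
apply: (leq_trans (lay_card n)); rewrite -sum_nat_const; apply: leq_sum => u hu.
by rewrite leq_sub2r // -(lay_side hu) nb_deg.
Qed.

End Ball.

Lemma half2 m : (m.*2)./2 = m.
Proof. exact: (half_bit_double m false). Qed.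
Lemma half2S m : (m.*2.+1)./2 = m.
Proof. exact: (half_bit_double m true). Qed.

Lemma arith1 (a b c k : nat) : a + c <= 2 * k - 2 -> b + c = 2 * k - 2 -> b <= k - 1 ->
  k - 1 - b + a <= k - 1.
Proof. lia. Qed.
Lemma arith2 (a b k : nat) : a + b <= 2 * k - 2 -> k - 1 < b -> b - (k - 1) + a <= k - 1.
Proof. lia. Qed.

Lemma arith3 (D : nat) : D <= (D - 1) ^ 0 + (D - 1) ^ 1.
Proof. rewrite expn0 expn1; lia. Qed.

Lemma arith5 (D y : nat) : D * y <= y + y * (D - 1).
Proof. case: D => [|D]; first by rewrite mul0n. rewrite subSS subn0 mulnC mulnS. exact: leqnn. Qed.

Theorem lemma8 (L R : finType) (adj : L -> R -> bool)
  (hdeg : forall l : L, degL adj l = 2)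
  (k : nat) (hk : 2 <= k) (S : {set L})
  (htree : is_tree adj S)
  (hlong : longest_path_len adj S (2 * k - 2)) :
  #|S| <= \sum_(0 <= i < k - 1) (dcmax adj - 1) ^ ((i + 1)./2).
Proof.
have esym := @esymE L R adj S.
case: hlong => [[x0 [p [hp hsz]]] hmax].
case: htree => [_ [hconn hacyc]].
move: (hp); rewrite /is_path => /andP [hpath huniq].
have hx0 : isL x0 = false.
  case: x0 hp hpath huniq => [l|r] // hp hpath huniq.
  case: p hp hpath huniq hsz => [|b p'] hp hpath huniq hsz; first by move: hsz => /=; lia.
  case: b hp hpath huniq hsz => [l'|r1] hp hpath huniq hsz; first by [].
  move: hpath => /= /andP [/andP [lS ar1] hpath'].
  have : 0 < #|[set r | adj l r] :\ r1|.
    have := cardsD1 r1 [set r | adj l r]; rewrite inE ar1.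
    move: (hdeg l); rewrite /degL => -> /=; lia.
  case/card_gt0P => r2; rewrite !inE => /andP [r21 ar2].
  case: (boolP (inr r2 \in (inl l : L + R) :: inr r1 :: p')) => hin.
  - move: hin; rewrite !inE /=.
    case/orP => [/eqP [] h21|]; first by rewrite h21 eqxx in r21.
    move=> hin2; move: hp; case/splitPr: hin2 => p1 p2 hp.
    have := hacyc (inl l) (inr r1 :: rcons p1 (inr r2)).
    rewrite last_cons last_rcons /= lS ar2 /= => h; suff: false by [].
    apply: h; last by rewrite size_rcons.
    move: hp; rewrite /is_path -cat_rcons -cat_cons cat_path -cat_cons cat_uniq.
    by case/andP => /andP [-> _] /andP [->].
  - have := hmax (inr r2) (inl l :: inr r1 :: p').
    rewrite /is_path /= lS ar2 ar1 hpath' /=.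
    move: huniq; rewrite /= => ->; rewrite hin => /(_ isT).
    move: hsz => /= ->; lia.
pose c := last x0 (take (k-1) p).
have hk1 : k - 1 <= size p by rewrite hsz; lia.
have hc : isL c = odd (k-1).
  by rewrite /c (path_parity (take_path (k-1) hpath)) hx0 size_takel.
have hball : forall v, v \in indV adj S -> v \in ball adj S c (k-1).
  move=> v hv.
  have hx0V : x0 \in indV adj S.
    case: p hpath hsz {hp huniq hk1 c hc} => [|b p'] /=; first lia.
    by case/andP => /e_indV.
  have := hconn v x0 hv hx0V => /connectP [w hw].
  case: (shortenP hw) => w' hw' huw' _ hlw.
  have hlast : last v w' \in x0 :: p by rewrite -hlw mem_head.
  have [q [hq1 hq2 hq3 _ hq5]] :=
    first_hit (A := fun z => z \in x0 :: p) hw' huw' hlast.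
  have [p1 [p2 [hp12 hy]]] : exists p1 p2, p = p1 ++ p2 /\ last x0 p1 = last v q.
    by case/splitPl: hq3 => p1 p2 h; exists p1, p2.
  have hP1 : path (indE adj S) x0 p1 /\ path (indE adj S) (last v q) p2.
    by move: hpath; rewrite hp12 cat_path hy => /andP.
  case: hP1 => hP1 hP2.
  have hU : uniq (x0 :: p1 ++ p2) by rewrite -hp12.
  have hU1 : uniq (rcons (belast x0 p1) (last v q)) /\ ~~ has (mem (x0 :: p1)) p2.
    by move: hU; rewrite -cat_cons cat_uniq -hy -lastI => /and3P [].
  case: hU1 => hU1 hdis.
  have hyb : last v q \notin belast x0 p1 by move: hU1; rewrite rcons_uniq => /andP [].
  have hub : uniq (belast x0 p1) by move: hU1; rewrite rcons_uniq => /andP [].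
  have inP1 : forall z, z \in x0 :: p1 -> z \in x0 :: p.
    by move=> z; rewrite hp12 -cat_cons mem_cat => ->.
  have inb : forall z, z \in belast x0 p1 -> z \in x0 :: p1.
    by move=> z hz; rewrite lastI mem_rcons inE hz orbT.
  have hA : size q + size p1 <= 2 * k - 2.
    have [r1 r2 r3] := walk_rev esym hP1.
    rewrite -r3 -size_cat; apply: (hmax v); rewrite /is_path cat_path hq1 -hy r1 /=.
    change (uniq ((v :: q) ++ rev (belast x0 p1))); rewrite cat_uniq hq2 rev_uniq hub andbT /=.
    apply/hasPn => z; rewrite mem_rev => hz; apply/negP => hzq.
    have := hq5 z hzq (inP1 z (inb z hz)) => hzy.
    by move: hyb; rewrite -hzy hz.
  have hB : size q + size p2 <= 2 * k - 2.
    rewrite -size_cat; apply: (hmax v); rewrite /is_path cat_path hq1 hP2 /=.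
    change (uniq ((v :: q) ++ p2)); rewrite cat_uniq hq2 /=.
    have hu2 : uniq p2 by move: hU; rewrite -cat_cons cat_uniq => /and3P [].
    rewrite hu2 andbT; apply/hasPn => z hz; apply/negP => hzq.
    have hzP : z \in x0 :: p by rewrite hp12 inE mem_cat hz !orbT.
    have := hq5 z hzq hzP => hzy.
    by move/hasPn: hdis => /(_ z hz); rewrite /= hzy -hy mem_last.
  have hs12 : size p1 + size p2 = 2 * k - 2 by rewrite -size_cat -hp12.
  have hyt : last v q = last x0 (take (size p1) p) by rewrite hp12 take_size_cat // hy.
  have hc0 : c \in ball adj S c 0 by rewrite /= inE.
  have [r1 r2 r3] := walk_rev esym hq1.
  have hfin : forall n, last v q \in ball adj S c n -> n + size q <= k - 1 ->
      v \in ball adj S c (k - 1).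
    move=> n hn hnk; have := walk_ball r1 hn; rewrite r2 r3.
    by apply/subsetP/ball_mono.
  case: (leqP (size p1) (k-1)) => h.
  - have [t [ht1 ht2 ht3]] := walk_take hpath h hk1.
    have [t1 t2 t3] := walk_rev esym ht1.
    rewrite ht2 -/c -hyt in t1 t2.
    have := walk_ball t1 hc0; rewrite t2 add0n => hyb'.
    apply: hfin hyb' _; rewrite size_rev size_belast ht3; exact: arith1 hB hs12 h.
  - have hp1 : size p1 <= size p by rewrite hp12 size_cat leq_addr.
    have [t [ht1 ht2 ht3]] := walk_take hpath (ltnW h) hp1.
    rewrite -/c -hyt in ht1 ht2.
    have := walk_ball ht1 hc0; rewrite ht2 add0n => hyb'.
    apply: hfin hyb' _; rewrite ht3; exact: arith2 hA h.
set D := dcmax adj.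
have hS : #|S| <= #|ball adj S c (k-1) :&: Lset L R|.
  rewrite -(card_imset _ (@inl_inj L R)); apply: subset_leq_card.
  apply/subsetP => u /imsetP [l hl ->]; rewrite !inE /= andbT; apply: hball.
  by rewrite inE.
have rec := @lay_rec L R adj S c hdeg.
have stp := @sL_step L R adj S c.
have LL := @layL_le L R adj S c.
have L0 := @layL0 L R adj S c.
have a0 : #|lay adj S c 0| = 1 by rewrite /= cards1.
have s0 : #|ball adj S c 0 :&: Lset L R| = isL c.
  case hcL: (isL c).
    rewrite (setIidPl _) ?cards1 //; apply/subsetP => u; rewrite !inE => /eqP ->.
    by rewrite hcL.
  apply/eqP; rewrite cards_eq0; apply/eqP/setP => u; rewrite !inE; apply/negbTE.
  by apply/negP => /andP [/eqP -> ]; rewrite hcL.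
apply: (leq_trans hS).
case hcL: (isL c).
-
  have hodd : odd (k - 1) by rewrite -hc.
  have [j hj] : exists j, k - 1 = j.*2.+1.
    by exists (k - 1)./2; rewrite -[LHS]odd_double_half hodd.
  rewrite hj.
  suff : #|ball adj S c j.*2.+1 :&: Lset L R| <= \sum_(0 <= i < j.*2.+1) (D - 1) ^ ((i + 1)./2)
         /\ #|lay adj S c j.*2.+1| <= 2 * (D - 1) ^ j by case.
  elim: j {hj} => [|j [IH1 IH2]].
    split.
      apply: (leq_trans (stp 0)); rewrite s0 hcL (L0 1) ?hcL //.
      by rewrite big_nat1.
    by apply: (leq_trans (rec 0)); rewrite a0 hcL /= expn0.
  rewrite doubleS.
  have h2 : #|lay adj S c j.*2.+2| <= 2 * (D - 1) ^ j.+1.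
    apply: (leq_trans (rec _)); rewrite hcL /= odd_double /= expnSr mulnA.
    by rewrite leq_mul2r IH2 orbT.
  have h3 : #|lay adj S c j.*2.+3| <= 2 * (D - 1) ^ j.+1.
    apply: (leq_trans (rec _)); rewrite hcL /= odd_double /= muln1 //.
  split; last exact: h3.
  apply: (leq_trans (stp _)); rewrite (L0 j.*2.+3) ?addn0; last by rewrite hcL /= odd_double.
  apply: (leq_trans (stp _)).
  rewrite big_nat_recr // big_nat_recr // [X in _ <= X]/= -addnA.
  apply: leq_add => //; apply: (leq_trans (LL _)); apply: (leq_trans h2).
  have e1 : uphalf (j.*2 + 1) = j.+1 by rewrite addn1 /= half2.
  have e2 : (j.*2 + 1)./2 = j by rewrite addn1 half2S.
  by rewrite e1 e2 mul2n -addnn.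
- have hev : ~~ odd (k - 1) by rewrite -hc hcL.
  have [j hj] : exists j, k - 1 = j.*2.+2.
    have hm := even_halfK hev.
    have hk1' : 0 < k - 1 by rewrite subn_gt0.
    case E: (k - 1)./2 => [|j]; first by rewrite -hm E in hk1'.
    by exists j; rewrite -hm E.
  rewrite hj.
  suff : #|ball adj S c j.*2.+2 :&: Lset L R| <= \sum_(0 <= i < j.*2.+2) (D - 1) ^ ((i + 1)./2)
         /\ #|lay adj S c j.*2.+2| <= D * (D - 1) ^ j by case.
  elim: j {hj} => [|j [IH1 IH2]].
    have h1 : #|lay adj S c 1| <= D.
      by apply: (leq_trans (rec 0)); rewrite a0 hcL /= subn0 mul1n.
    split.
      apply: (leq_trans (stp 1)); rewrite (L0 2) ?addn0; last by rewrite hcL.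
      apply: (leq_trans (stp 0)); rewrite s0 hcL add0n.
      apply: (leq_trans (LL 1)); apply: (leq_trans h1).
      rewrite big_nat_recr // big_nat1 [X in _ <= X]/=.
      exact: arith3.
    apply: (leq_trans (rec 1)); rewrite hcL /= muln1 expn0 muln1 //.
  rewrite doubleS.
  have h3 : #|lay adj S c j.*2.+3| <= D * (D - 1) ^ j.+1.
    apply: (leq_trans (rec _)); rewrite hcL /= odd_double /= expnSr mulnA.
    by rewrite leq_mul2r IH2 orbT.
  have h4 : #|lay adj S c j.*2.+4| <= D * (D - 1) ^ j.+1.
    apply: (leq_trans (rec _)); rewrite hcL /= odd_double /= muln1 //.
  split; last exact: h4.
  apply: (leq_trans (stp _)); rewrite (L0 j.*2.+4) ?addn0; last by rewrite hcL /= odd_double.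
  apply: (leq_trans (stp _)).
  rewrite big_nat_recr // big_nat_recr // [X in _ <= X]/= -addnA.
  apply: leq_add => //; apply: (leq_trans (LL _)); apply: (leq_trans h3).
  have e1 : uphalf (j.*2 + 1) = j.+1 by rewrite addn1 /= half2.
  have e2 : (j.*2 + 1)./2 = j by rewrite addn1 half2S.
  by rewrite e1 e2 [(D - 1) ^ j.+2]expnSr arith5.
Qed.
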